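(* Consider a matched pair study ($n_i=2$). Suppose the bounded null $\overline H_0$ holds, $\Gamma^\star_{(k)}\le\Gamma_0$ for some $1\le k\le I$ and $\Gamma_0\in[1,\infty]$, and the statistic $t(\cdot,\cdot)$ is effect increasing or differential increasing. Then $\overline p_{\Gamma_0;k}$, computed with $q_{ij}=q_{ij}(Y)$ (i.e. pretending Fisher's sharp null holds so that $Y(0)=Y$) and $T=t(Z,Y)$, is still a valid $p$-value: $\mathbb P(\overline p_{\Gamma_0;k}\le\alpha)\le\alpha$ for all $\alpha\in(0,1)$.
   Context: Setting: $I$ matched pairs; potential outcomes fixed; $Z\in\mathcal Z=\{z\in\{0,1\}^{2I}:z_{i1}+z_{i2}=1\ \forall i\}$ random with true mechanism $\mathbb P(Z=z)=\prod_i\prod_j(p^\star_{ij})^{z_{ij}}$, $p^\star_{i1}+p^\star_{i2}=1$; $\Gamma^\star_i=\max_jp^\star_{ij}/\min_kp^\star_{ik}\in[1,\infty]$, $\Gamma^\star_{(k)}$ its $k$th smallest. Observed $Y=Z\circ Y(1)+(1-Z)\circ Y(0)$ ($\circ$ = elementwise product). Bounded null $\overline H_0$: $Y_{ij}(1)\le Y_{ij}(0)$ for all $i,j$. The statistic has the form $t(z,y)=\sum_i\sum_jz_{ij}q_{ij}(y)$ for functions $q_{ij}:\mathbb R^{2I}\to\mathbb R$. Effect increasing: $t(z,y+z\circ\eta+(1-z)\circ\xi)\ge t(z,y)$ for all $z\in\mathcal Z$, $y,\eta,\xi$ with $\eta\succcurlyeq0\succcurlyeq\xi$. Differential increasing: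 $t(z,y+a\circ\eta)-t(z,y)\le t(a,y+a\circ\eta)-t(a,y)$ for all $z,a\in\mathcal Z$, $y$, and $\eta\succcurlyeq0$. With $q_{ij}=q_{ij}(Y)$: $\mathcal I_k$ is a set of $k$ pairs with smallest $|q_{i1}-q_{i2}|$; $\overline T(\Gamma_0;k)$ is a sum of independent variables equal, for $i\in\mathcal I_k$, to $\max\{q_{i1},q_{i2}\}$ w.p. $\Gamma_0/(1+\Gamma_0)$ (w.p. 1 if $\Gamma_0=\infty$) and $\min\{q_{i1},q_{i2}\}$ otherwise, and for $i\notin\mathcal I_k$ to $\max\{q_{i1},q_{i2}\}$ w.p. 1; $\overline p_{\Gamma_0;k}=\mathbb P(\overline T(\Gamma_0;k)\ge c)|_{c=T}$ with $q_{ij}$ held fixed. *)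

(* Defs.v *)
From HB Require Import structures.
From mathcomp Require Import all_boot all_order all_algebra.
From mathcomp Require Import constructive_ereal.
Set Implicit Arguments. Unset Strict Implicit. Unset Printing Implicit Defensive.
Import Order.TTheory GRing.Theory Num.Theory.
Local Open Scope ring_scope.

(* Pairs are indexed by i : 'I_I, units within a pair by j : 'I_2.
   A vector in R^{2I} is a function 'I_I -> 'I_2 -> R. *)
Definition vec (R : Type) (I : nat) := 'I_I -> 'I_2 -> R.

(* An element of the assignment space \mathcal Z is encoded by the index of the
   treated unit in each pair; [zv z] is the corresponding 0/1 vector z_{ij}. *)
Definition assign (I : nat) := {ffun 'I_I -> 'I_2}.

Section Defs.
Variables (R : realFieldType) (I : nat).

Definition zv (z : assign I) : vec R I := fun i j => (((z i == j) : bool) : nat)%:R.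

Definition Yobs (Y1 Y0 : vec R I) (z : assign I) : vec R I :=
  fun i j => zv z i j * Y1 i j + (1 - zv z i j) * Y0 i j.

Definition bounded_null (Y1 Y0 : vec R I) : Prop :=
  forall i j, Y1 i j <= Y0 i j.

Definition tstat (q : 'I_I -> 'I_2 -> (vec R I -> R)) (z : assign I) (y : vec R I) : R :=
  \sum_(i < I) \sum_(j < 2) zv z i j * q i j y.

Definition effect_increasing (q : 'I_I -> 'I_2 -> (vec R I -> R)) : Prop :=
  forall (z : assign I) (y eta xi : vec R I),
    (forall i j, 0 <= eta i j) -> (forall i j, xi i j <= 0) ->
    tstat q z y <= tstat q z (fun i j => y i j + zv z i j * eta i j + (1 - zv z i j) * xi i j).

Definition differential_increasing (q : 'I_I -> 'I_2 -> (vec R I -> R)) : Prop :=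
  forall (z a : assign I) (y eta : vec R I),
    (forall i j, 0 <= eta i j) ->
    tstat q z (fun i j => y i j + zv a i j * eta i j) - tstat q z y <=
    tstat q a (fun i j => y i j + zv a i j * eta i j) - tstat q a y.

Definition prob_assign (p : vec R I) (z : assign I) : R :=
  \prod_(i < I) \prod_(j < 2) p i j ^+ (z i == j).

Definition is_mechanism (p : vec R I) : Prop :=
  forall i, 0 <= p i 0 /\ 0 <= p i 1 /\ p i 0 + p i 1 = 1.

Definition Prob (p : vec R I) (E : pred (assign I)) : R :=
  \sum_(z | E z) prob_assign p z.

Definition Gamma_i (p : vec R I) (i : 'I_I) : \bar R :=
  let mx := Num.max (p i 0) (p i 1) in
  let mn := Num.min (p i 0) (p i 1) in
  if mn == 0 then +oo%E else (mx / mn)%:E.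

(* Gamma*_(k): the k-th smallest of the Gamma*_i (k is 1-based). *)
Definition Gamma_ord (p : vec R I) (k : nat) : \bar R :=
  nth +oo%E (sort (fun x y : \bar R => (x <= y)%E) [seq Gamma_i p i | i <- enum 'I_I]) k.-1.

Definition pi_of (G0 : \bar R) : R :=
  match G0 with
  | EFin g => g / (1 + g)
  | +oo%E => 1
  | -oo%E => 0
  end.

(* [pbar G0 S qv c] = P(Tbar(G0; k) >= c), where S plays the role of I_k and the
   q_{ij} are held fixed at qv.  Tbar is a sum of independent variables: b i = true
   means pair i contributes max{q_i1,q_i2}, b i = false means min{q_i1,q_i2}. *)
Definition pbar (G0 : \bar R) (S : {set 'I_I}) (qv : vec R I) (c : R) : R :=
  \sum_(b : {ffun 'I_I -> bool})
     (\prod_(i < I)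
        (if i \in S then (if b i then pi_of G0 else 1 - pi_of G0)
         else (if b i then 1 else 0)))
     * (((c <= \sum_(i < I) (if b i then Num.max (qv i 0) (qv i 1)
                                   else Num.min (qv i 0) (qv i 1)))%R : bool) : nat)%:R.

Definition smallest_k_set (qv : vec R I) (k : nat) (S : {set 'I_I}) : Prop :=
  #|S| = k /\
  forall i i', i \in S -> i' \notin S -> `|qv i 0 - qv i 1| <= `|qv i' 0 - qv i' 1|.

End Defs.

(* Main.v *)
From Pilot Require Import Defs.
From HB Require Import structures.
From mathcomp Require Import all_boot all_order all_algebra.
From mathcomp Require Import constructive_ereal perm.
From mathcomp Require Import ring lra.
Set Implicit Arguments. Unset Strict Implicit. Unset Printing Implicit Defensive.
Import Order.TTheory GRing.Theory Num.Theory.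
Local Open Scope ring_scope.
Import Pilot.Defs.

Definition wt (R : realFieldType) (x : R) (bb : bool) : R := if bb then x else 1 - x.

Definition Phi (R : realFieldType) (I : nat) (r : 'I_I -> R)
  (f : {ffun 'I_I -> bool} -> R) : R :=
  \sum_(b : {ffun 'I_I -> bool}) (\prod_(i < I) wt (r i) (b i)) * f b.

Lemma Phi_ext (R : realFieldType) (I : nat) (r1 r2 : 'I_I -> R) (f : {ffun 'I_I -> bool} -> R) :
  (forall i, r1 i = r2 i) -> Phi r1 f = Phi r2 f.
Proof.
move=> e; apply: eq_bigr => b _; congr (_ * _); apply: eq_bigr => i _.
by rewrite e.
Qed.

Definition flip (I : nat) (i0 : 'I_I) (b : {ffun 'I_I -> bool}) : {ffun 'I_I -> bool} :=
  [ffun i => if i == i0 then ~~ b i else b i].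

Lemma flipK (I : nat) (i0 : 'I_I) : involutive (flip i0).
Proof.
move=> b; apply/ffunP => i; rewrite !ffunE.
by case: (i == i0); rewrite ?negbK.
Qed.

Lemma wt_ge0 (R : realFieldType) (x : R) bb : 0 <= x <= 1 -> 0 <= wt x bb.
Proof. by case/andP=> h1 h2; case: bb => /=; lra. Qed.

Lemma subr_ge0_aux (R : realFieldType) (x y : R) : x <= y -> 0 <= y - x.
Proof. by rewrite subr_ge0. Qed.

Lemma Phi_mono1 (R : realFieldType) (I : nat) (i0 : 'I_I) (r1 r2 : 'I_I -> R) (f : {ffun 'I_I -> bool} -> R) :
  (forall i, i != i0 -> r1 i = r2 i) -> (forall i, i != i0 -> 0 <= r1 i <= 1) ->
  r1 i0 <= r2 i0 ->
  (forall b : {ffun 'I_I -> bool}, b i0 -> f (flip i0 b) <= f b) -> Phi r1 f <= Phi r2 f.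
Proof.
move=> e01 h01 le12 fm.
pose h (r : 'I_I -> R) (b : {ffun 'I_I -> bool}) := (\prod_(i < I) wt (r i) (b i)) * f b.
have key (r : 'I_I -> R) : 2 * Phi r f = \sum_b (h r b + h r (flip i0 b)).
  rewrite mulr2n mulrDl mul1r big_split /=; congr (_ + _).
  exact: (reindex_inj (inv_inj (@flipK I i0))).
have V (r : 'I_I -> R) (b : {ffun 'I_I -> bool}) : \prod_(i < I) wt (r i) (b i) =
     wt (r i0) (b i0) * \prod_(i < I | i != i0) wt (r i) (b i).
  by rewrite (bigD1 i0).
suff : 2 * Phi r1 f <= 2 * Phi r2 f by rewrite ler_pM2l.
rewrite !key; apply: ler_sum => b _; rewrite /h !V.
have E1 : \prod_(i < I | i != i0) wt (r1 i) (b i) = \prod_(i < I | i != i0) wt (r2 i) (b i).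
  by apply: eq_bigr => i /e01 ->.
have E2 (r : 'I_I -> R) : \prod_(i < I | i != i0) wt (r i) (flip i0 b i) =
            \prod_(i < I | i != i0) wt (r i) (b i).
  by apply: eq_bigr => i /negbTE hi; rewrite ffunE hi.
rewrite !E2 -E1.
have Vge0 : 0 <= \prod_(i < I | i != i0) wt (r1 i) (b i).
  by apply: prodr_ge0 => i /h01; apply: wt_ge0.
set v := \prod_(i < I | i != i0) _ in Vge0 *.
have fl : flip i0 b i0 = ~~ b i0 by rewrite ffunE eqxx.
rewrite fl.
have aux (x y u w : R) : x <= y -> u <= w -> 0 <= v ->
    x * v * w + (1 - x) * v * u <= y * v * w + (1 - y) * v * u.
  move=> hxy huw hv.
  have := mulr_ge0 (mulr_ge0 (subr_ge0_aux hxy) hv) (subr_ge0_aux huw).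
  move=> hh; nra.
case hb: (b i0) => /=.
  by apply: aux => //; apply: fm.
have H : f b <= f (flip i0 b).
  by have := fm (flip i0 b); rewrite fl hb flipK; apply.
rewrite addrC [X in _ <= X]addrC; exact: aux.
Qed.

Lemma Phi_mono (R : realFieldType) (I : nat) (r1 r2 : 'I_I -> R) (f : {ffun 'I_I -> bool} -> R) :
  (forall i, 0 <= r1 i <= 1) -> (forall i, 0 <= r2 i <= 1) -> (forall i, r1 i <= r2 i) ->
  (forall (b : {ffun 'I_I -> bool}) i0, b i0 -> f (flip i0 b) <= f b) ->
  Phi r1 f <= Phi r2 f.
Proof.
move=> h1 h2 h12 fm.
pose mix (n : nat) (i : 'I_I) := if (i < n)%N then r2 i else r1 i.
have mix01 n i : 0 <= mix n i <= 1 by rewrite /mix; case: ifP.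
have : forall n, Phi r1 f <= Phi (mix n) f.
  elim=> [|n IH].
    by rewrite (@Phi_ext _ _ (mix 0%N) r1) // => i; rewrite /mix ltn0.
  apply: (le_trans IH).
  case: (ltnP n I) => hn.
    pose i0 : 'I_I := Ordinal hn.
    apply: (@Phi_mono1 _ _ i0) => //.
    - move=> i hi; rewrite /mix ltnS (leq_eqVlt i n).
      have -> : (nat_of_ord i == n) = false.
        by apply/negbTE; apply: contra hi => /eqP hin; apply/eqP/val_inj.
      by [].
    - by rewrite /mix /= ltnn ltnSn.
    - by move=> b; apply: fm.
  rewrite (@Phi_ext _ _ (mix n) (mix n.+1)) // => i.
  rewrite /mix; have hi : (i < n)%N by apply: leq_trans (ltn_ord i) hn.
  by rewrite hi (leq_trans hi (leqnSn n)).
move/(_ I); rewrite (@Phi_ext _ _ (mix I) r2) // => i.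
by rewrite /mix ltn_ord.
Qed.

Definition rJ (R : realFieldType) (I : nat) (pi0 : R) (J : {set 'I_I}) (i : 'I_I) : R :=
  if i \in J then pi0 else 1.

Definition fsum (R : realFieldType) (I : nat) (M m : 'I_I -> R) (c : R)
  (b : {ffun 'I_I -> bool}) : R :=
  (((c <= \sum_(i < I) (if b i then M i else m i))%R : bool) : nat)%:R.

Lemma ind_mono (R : realFieldType) (c s1 s2 : R) : s1 <= s2 ->
  (((c <= s1)%R : bool) : nat)%:R <= (((c <= s2)%R : bool) : nat)%:R :> R.
Proof.
move=> h; case h1: (c <= s1); last by case: (c <= s2).
by rewrite (le_trans h1 h).
Qed.

Lemma fsum_mono (R : realFieldType) (I : nat) (M m : 'I_I -> R) c :
  (forall i, m i <= M i) ->
  forall (b : {ffun 'I_I -> bool}) i0, b i0 -> fsum M m c (flip i0 b) <= fsum M m c b.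
Proof.
move=> hmM b i0 hb; apply: ind_mono; apply: ler_sum => i _; rewrite ffunE.
by case: eqP => [->|_]; rewrite ?hb //=.
Qed.

Lemma rJ01 (R : realFieldType) (I : nat) (pi0 : R) J i : 0 <= pi0 <= 1 ->
  0 <= @rJ R I pi0 J i <= 1.
Proof. by rewrite /rJ; case: ifP => // _ _; rewrite ler01 lexx. Qed.

Lemma sum2 (R : realFieldType) (I : nat) (i i' : 'I_I) (g : 'I_I -> R) :
  i != i' -> \sum_(k < I) g k = g i + g i' + \sum_(k < I | (k != i) && (k != i')) g k.
Proof.
move=> nii'; rewrite (bigD1 i) //= (bigD1 i') /=; last by rewrite eq_sym.
by rewrite addrA.
Qed.

Lemma Phi_swap (R : realFieldType) (I : nat) (pi0 : R) (M m : 'I_I -> R) c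
   (J : {set 'I_I}) (i i' : 'I_I) :
  0 <= pi0 <= 1 -> i \notin J -> i' \in J -> M i - m i <= M i' - m i' ->
  Phi (rJ pi0 J) (fsum M m c) <= Phi (rJ pi0 (i |: (J :\ i'))) (fsum M m c).
Proof.
move=> hpi hi hi' hd.
have nii' : i != i'. by apply: contraNneq hi => ->.
set J2 := i |: (J :\ i').
pose tau (b : {ffun 'I_I -> bool}) : {ffun 'I_I -> bool} := [ffun k => b (tperm i i' k)].
have tauK : involutive tau.
  by move=> b; apply/ffunP => k; rewrite !ffunE tpermK.
rewrite /Phi (reindex_inj (inv_inj tauK)) /=.
apply: ler_sum => b _.
have -> : \prod_(k < I) wt (rJ pi0 J k) (tau b k) = \prod_(k < I) wt (rJ pi0 J2 k) (b k).
  rewrite (reindex_inj (inv_inj (tpermK i i'))) /=.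
  apply: eq_bigr => k _; rewrite ffunE tpermK; congr (wt _ _).
  rewrite /rJ /J2 !inE.
  case: tpermP => [->|->|/eqP hk1 /eqP hk2].
  - by rewrite eqxx hi'.
  - by rewrite (negbTE hi) eq_sym (negbTE nii') eqxx.
  - by rewrite (negbTE hk1) (negbTE hk2).
case hb': (b i'); last first.
  have W0 : \prod_(k < I) wt (rJ pi0 J2 k) (b k) = 0.
    rewrite (bigD1 i') //= {1}/rJ /J2 !inE eqxx /= eq_sym (negbTE nii') hb' /=.
    by rewrite subrr mul0r.
  by rewrite W0 !mul0r.
apply: ler_wpM2l.
  by apply: prodr_ge0 => k _; apply: wt_ge0; apply: rJ01.
apply: ind_mono.
rewrite !(sum2 _ nii') /=.
have -> : \sum_(k < I | (k != i) && (k != i')) (if tau b k then M k else m k) =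
          \sum_(k < I | (k != i) && (k != i')) (if b k then M k else m k).
  by apply: eq_bigr => k /andP [h1 h2]; rewrite ffunE tpermD // eq_sym.
rewrite !ffunE tpermL tpermR hb'.
case: (b i); lra.
Qed.

Lemma Phi_setB (R : realFieldType) (I : nat) (pi0 : R) (M m : 'I_I -> R) c
   (S : {set 'I_I}) :
  0 <= pi0 <= 1 ->
  (forall i i', i \in S -> i' \notin S -> M i - m i <= M i' - m i') ->
  forall J : {set 'I_I}, #|J| = #|S| ->
  Phi (rJ pi0 J) (fsum M m c) <= Phi (rJ pi0 S) (fsum M m c).
Proof.
move=> hpi hS.
suff H : forall n (J : {set 'I_I}), #|J :\: S| = n -> #|J| = #|S| ->
  Phi (rJ pi0 J) (fsum M m c) <= Phi (rJ pi0 S) (fsum M m c).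
  by move=> J; apply: H.
elim=> [|n IH] J hn hc.
  move/cards0_eq/eqP: hn; rewrite setD_eq0 => sJS.
  have /eqP -> : J == S by rewrite eqEcard sJS hc leqnn.
  by [].
have : J :\: S != set0 by rewrite -card_gt0 hn.
case/set0Pn => i' hi'.
have hSJ : #|S :\: J| = #|J :\: S| by rewrite !cardsD setIC hc.
have : S :\: J != set0 by rewrite -card_gt0 hSJ hn.
case/set0Pn => i hi.
move: hi hi'; rewrite !inE => /andP [hiJ hiS] /andP [hi'S hi'J].
apply: le_trans (Phi_swap c hpi hiJ hi'J (hS _ _ hiS hi'S)) _.
apply: IH.
  have -> : (i |: (J :\ i')) :\: S = (J :\: S) :\ i'.
    apply/setP => x; rewrite !inE.
    case: (eqVneq x i) => [->|_] /=.
    + by rewrite hiS /= andbF.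
    + by rewrite andbCA.
  have := cardsD1 i' (J :\: S); rewrite !inE hi'S hi'J hn /= add1n.
  by case.
rewrite cardsU1 !inE (negbTE hiJ) andbF /= add1n -hc (cardsD1 i' J) hi'J.
by [].
Qed.


Lemma pi01 (R : realFieldType) (G0 : \bar R) : (1%:E <= G0)%E -> 0 <= pi_of G0 <= 1.
Proof.
case: G0 => [g| |] //=; rewrite ?lee_fin => hg; last by rewrite ler01 lexx.
have h1 : 0 < 1 + g by lra.
rewrite divr_ge0 ?(ltW h1) ?(le_trans ler01 hg) //=.
by rewrite ler_pdivrMr // mul1r; lra.
Qed.

Lemma maxmin_sum (R : realFieldType) (x y : R) : Num.max x y + Num.min x y = x + y.
Proof.
by case: (leP x y) => h; rewrite addrC.
Qed.

Lemma maxmin_diff (R : realFieldType) (x y : R) : Num.max x y - Num.min x y = `|x - y|.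
Proof.
case: (leP x y) => h.
  by rewrite distrC ger0_norm // subr_ge0.
by rewrite gtr0_norm // subr_gt0.
Qed.

Lemma gamma_pi (R : realFieldType) (I : nat) (p : vec R I) (G0 : \bar R) (i : 'I_I) :
  is_mechanism p -> (1%:E <= G0)%E -> (Gamma_i p i <= G0)%E ->
  Num.max (p i 0) (p i 1) <= pi_of G0.
Proof.
move=> hm; have [h0 [h1 hs]] := hm i.
have mx1 : Num.max (p i 0) (p i 1) <= 1.
  by rewrite ge_max; apply/andP; split; lra.
rewrite /Gamma_i /=.
have mn0 : 0 <= Num.min (p i 0) (p i 1) by rewrite le_min h0.
have hsum := maxmin_sum (p i 0) (p i 1).
case: G0 => [g| |] //=; rewrite ?lee_fin => hg.
case: eqP => // /eqP mnn0; rewrite lee_fin => hle.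
have mnp : 0 < Num.min (p i 0) (p i 1) by rewrite lt_def mnn0 mn0.
move: hle; rewrite ler_pdivrMr // => hle.
have h1g : 0 < 1 + g by lra.
rewrite ler_pdivlMr //.
move: hle hsum; set mx := Num.max _ _; set mn := Num.min _ _ => hle hsum.
have e : mn = 1 - mx by lra.
rewrite e in hle.
nra.
Qed.

Lemma exists_good (R : realFieldType) (I : nat) (p : vec R I) (G0 : \bar R) (k : nat) :
  (k <= I)%N -> (Gamma_ord p k <= G0)%E ->
  exists J : {set 'I_I}, #|J| = k /\ forall i, i \in J -> (Gamma_i p i <= G0)%E.
Proof.
move=> hkI; rewrite /Gamma_ord.
set le := (fun x y : \bar R => (x <= y)%E).
set s0 := [seq Gamma_i p i | i <- enum 'I_I].
set s := sort le s0 => hG.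
have tot : total le by move=> x y; exact: le_total.
have ss : sorted le s by apply: sort_sorted.
have sz : size s = I by rewrite size_sort size_map size_enum_ord.
pose P := (fun x : \bar R => (x <= G0)%E).
have allk : all P (take k s).
  apply/(all_nthP +oo%E) => j; rewrite size_takel ?sz // => hj.
  rewrite nth_take //; apply: le_trans hG.
  apply: (sorted_leq_nth (@le_trans _ _) (@lexx _ _) +oo%E ss).
  - by rewrite inE sz (leq_trans hj).
  - by rewrite inE sz; case: k hkI hj => // k' hk' _; rewrite (leq_trans _ hk').
  - by case: k hkI hj => // k' _; rewrite ltnS.
have cnt : (k <= count P s0)%N.
  have -> : count P s0 = count P s.
    by apply/esym; move/seq.permP: (permEl (perm_sort le s0)); apply.
  rewrite -(cat_take_drop k s) count_cat.
  move: allk; rewrite all_count => /eqP ->.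
  by rewrite size_takel ?sz // leq_addr.
rewrite /s0 count_map in cnt.
set l := filter (preim (Gamma_i p) P) (enum 'I_I).
have hl : (k <= size l)%N by rewrite size_filter.
exists [set x in take k l]; split.
  have u : uniq (take k l).
    by apply: take_uniq; apply: filter_uniq; apply: enum_uniq.
  by rewrite cardsE; move/card_uniqP: u => ->; rewrite size_takel.
move=> i; rewrite inE => /mem_take; rewrite mem_filter => /andP [].
by [].
Qed.

Lemma prob_assignE (R : realFieldType) (I : nat) (p : vec R I) (a : assign I) :
  prob_assign p a = \prod_(i < I) p i (a i).
Proof.
apply: eq_bigr => i _; rewrite (bigD1 (a i)) //= eqxx expr1 big1 ?mulr1 //.
by move=> j; rewrite eq_sym => /negbTE ->; rewrite expr0.
Qed.

Lemma tstatE (R : realFieldType) (I : nat) (q : 'I_I -> 'I_2 -> (vec R I -> R))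
  (a : assign I) (y : vec R I) : tstat q a y = \sum_(i < I) q i (a i) y.
Proof.
apply: eq_bigr => i _; rewrite (bigD1 (a i)) //= /zv eqxx mul1r big1 ?addr0 //.
by move=> j; rewrite eq_sym => /negbTE ->; rewrite mul0r.
Qed.

Lemma ord2_cases (z : 'I_2) : z = 0 \/ z = 1.
Proof.
case: z => [[|[|n]] hz].
- by left; apply: val_inj.
- by right; apply: val_inj.
- by [].
Qed.

Lemma dominance (R : realFieldType) (I : nat) (p qv : vec R I) (G0 : \bar R) (k : nat)
   (S : {set 'I_I}) (c : R) :
  is_mechanism p -> (1%:E <= G0)%E -> (k <= I)%N -> (Gamma_ord p k <= G0)%E ->
  smallest_k_set qv k S ->
  \sum_(a : assign I) (\prod_(i < I) p i (a i)) *
     (((c <= \sum_(i < I) qv i (a i))%R : bool) : nat)%:R <= pbar G0 S qv c.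
Proof.
move=> hm hG hkI hGk [hcard hS].
pose M i := Num.max (qv i 0) (qv i 1).
pose m i := Num.min (qv i 0) (qv i 1).
pose amax i : 'I_2 := if qv i 0 <= qv i 1 then 1 else 0.
pose amin i : 'I_2 := if qv i 0 <= qv i 1 then 0 else 1.
pose r i := p i (amax i).
have hpi := pi01 hG.
have hmM i : m i <= M i by rewrite /m /M; case: (leP (qv i 0) (qv i 1)) => // /ltW.
have r01 i : 0 <= r i <= 1.
  have [h0 [h1 hs]] := hm i; rewrite /r /amax; case: ifP => _; apply/andP; split; lra.
pose e (b : {ffun 'I_I -> bool}) : assign I := [ffun i => if b i then amax i else amin i].
pose d (a : assign I) : {ffun 'I_I -> bool} := [ffun i => a i == amax i].
have neq i : (amin i == amax i) = false by rewrite /amin /amax; case: ifP.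
have step1 : \sum_(a : assign I) (\prod_(i < I) p i (a i)) *
     (((c <= \sum_(i < I) qv i (a i))%R : bool) : nat)%:R = Phi r (fsum M m c).
  rewrite (reindex e) /=; last first.
    apply: onW_bij; exists d.
      by move=> b; apply/ffunP => i; rewrite !ffunE; case: (b i); rewrite ?eqxx ?neq.
    move=> a; apply/ffunP => i; rewrite !ffunE; case: eqP => [//|hne].
    move: hne (neq i); rewrite /amin /amax.
    by case: ifP => _; case: (ord2_cases (a i)) => ->.
  apply: eq_bigr => b _; congr (_ * _).
    apply: eq_bigr => i _; rewrite ffunE /wt /r.
    case: (b i) => //; have [h0 [h1 hs]] := hm i.
    by rewrite /amin /amax; case: ifP => _; lra.
  rewrite /fsum; suff -> : \sum_(i < I) qv i (e b i) =
      \sum_(i < I) (if b i then M i else m i) by [].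
  apply: eq_bigr => i _.
  rewrite ffunE /M /m /amax /amin; case: (b i); case: (leP (qv i 0) (qv i 1)) => //.
have [J [hJ hJg]] := exists_good hkI hGk.
apply: le_trans (_ : Phi (rJ (pi_of G0) S) (fsum M m c) <= _).
  rewrite step1; apply: le_trans (_ : Phi (rJ (pi_of G0) J) (fsum M m c) <= _).
    apply: Phi_mono => //.
    - by move=> i; apply: rJ01.
    - move=> i; rewrite /rJ; case: ifP => hi; last by case/andP: (r01 i).
      apply: le_trans (gamma_pi hm hG (hJg _ hi)).
      by rewrite /r /amax; case: ifP => _; rewrite ?le_max lexx ?orbT.
    - by apply: fsum_mono.
  apply: Phi_setB => //; last by rewrite hJ hcard.
  by move=> i i' hi hi'; rewrite /M /m !maxmin_diff; apply: hS.
rewrite /Phi /pbar le_eqVlt; apply/orP; left; apply/eqP.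
apply: eq_bigr => b _; congr (_ * _).
apply: eq_bigr => i _; rewrite /rJ /wt.
by case: (i \in S); case: (b i); rewrite ?subrr.
Qed.

From Stdlib Require Import FunctionalExtensionality.

Lemma count_valid (R : realFieldType) (T : finType) (w W : T -> R) (alpha : R) :
  0 <= alpha -> (forall z, 0 <= w z) ->
  \sum_(z | \sum_a w a * (((W z <= W a)%R : bool) : nat)%:R <= alpha) w z <= alpha.
Proof.
move=> ha hw.
case: (pickP (fun z => \sum_a w a * (((W z <= W a)%R : bool) : nat)%:R <= alpha)) => [z0 hz0|none]; last first.
  by rewrite big_pred0.
case: (@arg_minP _ _ _ z0 (fun z => \sum_a w a * (((W z <= W a)%R : bool) : nat)%:R <= alpha) W hz0) => zs hzs hmin.
apply: le_trans hzs.
rewrite big_mkcond /=; apply: ler_sum => z _.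
case: ifP => hz; last by rewrite mulr_ge0 // ler0n.
by rewrite (hmin z hz) mulr1.
Qed.

Lemma zv01 (R : realFieldType) (I : nat) (z : assign I) i j :
  zv R z i j = 0 \/ zv R z i j = 1.
Proof. by rewrite /zv; case: (z i == j); [right|left]. Qed.

Lemma EI_step (R : realFieldType) (I : nat) (Y1 Y0 : vec R I)
  (q : 'I_I -> 'I_2 -> (vec R I -> R)) (z a : assign I) :
  bounded_null Y1 Y0 -> effect_increasing q ->
  tstat q a (Yobs Y1 Y0 a) <= tstat q a (Yobs Y1 Y0 z).
Proof.
move=> hb hei.
have := hei a (Yobs Y1 Y0 a) (fun i j => (1 - zv R z i j) * (Y0 i j - Y1 i j))
   (fun i j => zv R z i j * (Y1 i j - Y0 i j)).
have -> : (fun i j => Yobs Y1 Y0 a i j + zv R a i j * ((1 - zv R z i j) * (Y0 i j - Y1 i j)) +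
    (1 - zv R a i j) * (zv R z i j * (Y1 i j - Y0 i j))) = Yobs Y1 Y0 z.
  apply: functional_extensionality => i; apply: functional_extensionality => j.
  rewrite /Yobs.
  by case: (zv01 R z i j) => ->; case: (zv01 R a i j) => ->; ring.
apply.
  move=> i j; have := hb i j; case: (zv01 R z i j) => -> h; lra.
move=> i j; have := hb i j; case: (zv01 R z i j) => -> h; lra.
Qed.

Lemma DI_step (R : realFieldType) (I : nat) (Y1 Y0 : vec R I)
  (q : 'I_I -> 'I_2 -> (vec R I -> R)) (z a : assign I) :
  bounded_null Y1 Y0 -> differential_increasing q ->
  tstat q a Y0 - tstat q a (Yobs Y1 Y0 z) <= tstat q z Y0 - tstat q z (Yobs Y1 Y0 z).
Proof.
move=> hb hdi.
have := hdi a z (Yobs Y1 Y0 z) (fun i j => Y0 i j - Y1 i j).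
have -> : (fun i j => Yobs Y1 Y0 z i j + zv R z i j * (Y0 i j - Y1 i j)) = Y0.
  apply: functional_extensionality => i; apply: functional_extensionality => j.
  rewrite /Yobs.
  by case: (zv01 R z i j) => ->; ring.
apply => i j; have := hb i j; lra.
Qed.

Unset Implicit Arguments.

Theorem theoremA2 (R : realFieldType) (I : nat)
  (Y1 Y0 : vec R I) (p : vec R I)
  (q : 'I_I -> 'I_2 -> (vec R I -> R))
  (k : nat) (G0 : \bar R)
  (Ik : assign I -> {set 'I_I}) :
  is_mechanism p ->
  bounded_null Y1 Y0 ->
  (1 <= k)%N -> (k <= I)%N ->
  (1%:E <= G0)%E ->
  (Gamma_ord p k <= G0)%E ->
  (effect_increasing q \/ differential_increasing q) ->
  (forall z, smallest_k_set (fun i j => q i j (Yobs Y1 Y0 z)) k (Ik z)) ->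
  forall alpha : R, 0 < alpha < 1 ->
    Prob p (fun z => pbar G0 (Ik z) (fun i j => q i j (Yobs Y1 Y0 z))
                          (tstat q z (Yobs Y1 Y0 z)) <= alpha) <= alpha.
Proof.
move=> hm hb hk1 hkI hG hGk hinc hIk alpha /andP [ha0 ha1].
have w0 (z : assign I) : 0 <= prob_assign p z.
  rewrite prob_assignE; apply: prodr_ge0 => i _; have [h0 [h1 _]] := hm i.
  by case: (ord2_cases (z i)) => ->.
suff main : forall W : assign I -> R,
    (forall z a, W z <= W a -> tstat q z (Yobs Y1 Y0 z) <= tstat q a (Yobs Y1 Y0 z)) ->
    Prob p (fun z => pbar G0 (Ik z) (fun i j => q i j (Yobs Y1 Y0 z))
                          (tstat q z (Yobs Y1 Y0 z)) <= alpha) <= alpha.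
  case: hinc => hinc.
    apply: (main (fun a => tstat q a (Yobs Y1 Y0 a))) => z a h.
    by apply: le_trans h _; apply: (@EI_step _ _ Y1 Y0 q z a hb hinc).
  apply: (main (fun a => tstat q a Y0)) => z a h.
  have := @DI_step _ _ Y1 Y0 q z a hb hinc; move: h => /= h; lra.
move=> W hW.
apply: le_trans (count_valid W (ltW ha0) w0).
rewrite /Prob big_mkcond [X in _ <= X]big_mkcond; apply: ler_sum => z _.
case: ifP => hp; case: ifP => hG' //.
  exfalso; move/negbT: hG'; rewrite -ltNge => hlt.
  have : \sum_a prob_assign p a * (((W z <= W a)%R : bool) : nat)%:R <=
         pbar G0 (Ik z) (fun i j => q i j (Yobs Y1 Y0 z)) (tstat q z (Yobs Y1 Y0 z)).
    apply: le_trans (dominance _ hm hG hkI hGk (hIk z)).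
    apply: ler_sum => a _; rewrite -prob_assignE; apply: ler_wpM2l => //.
    case: (boolP (W z <= W a)) => h; last by rewrite ler0n.
    by rewrite -tstatE (hW z a h).
  move=> h; have := le_trans h hp; rewrite leNgt hlt.
  by [].
Qed.
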